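(* Let $\alpha>0$, $t_0>0$, and define the set-valued map $G:[t_0,+\infty)\times\mathcal H\times\mathcal H\rightrightarrows\mathcal H\times\mathcal H$ by $$G(t,u,v)=\{v\}\times\Big(-\tfrac{\alpha}{t}v-\arg\min_{g\in C(u)}\langle g,-v\rangle\Big).$$ Then: (i) for all $(t,u,v)$, the set $G(t,u,v)$ is convex and compact; (ii) $G$ is upper semicontinuous; (iii) if $\dim\mathcal H<+\infty$, the map $\phi:[t_0,+\infty)\times\mathcal H\times\mathcal H\to\mathcal H\times\mathcal H$, $(t,u,v)\mapsto\operatorname{proj}_{G(t,u,v)}(0)$, is locally compact; (iv) if the gradients $\nabla f_i$ are globally $L$-Lipschitz continuous, then there exists $c>0$ such that for all $(t,u,v)\in[t_0,+\infty)\times\mathcal H\times\mathcal H$, $$\sup_{\xi\in G(t,u,v)}\|\xi\|_{\mathcal H\times\mathcal H}\le c\big(1+\|(u,v)\|_{\mathcal H\times\mathcal H}\big),$$ where $\|(x,y)\|_{\mathcal H\times\mathcal H}=\sqrt{\|x\|^2+\|y\|^2}$.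
   Context: $\mathcal H$ is a real Hilbert space. $f_1,\dots,f_m:\mathcal H\to\mathbb R$ are convex and continuously differentiable. $C(u)=\operatorname{co}\{\nabla f_i(u):i=1,\dots,m\}$. For a closed convex $K$, $\operatorname{proj}_K(y)=\arg\min_{w\in K}\|w-y\|^2$. A set-valued map $G:\mathcal X\rightrightarrows\mathcal Y$ is upper semicontinuous at $x_0$ if for every open $N\supset G(x_0)$ there is a neighborhood $M$ of $x_0$ with $G(M)\subset N$; it is upper semicontinuous if this holds at every point. A single-valued map $\phi:\mathcal X\to\mathcal Y$ is locally compact if every point has a neighborhood that is mapped into a compact subset of $\mathcal Y$. *)

(* Defs.v *)
From HB Require Import structures.
From mathcomp Require Import all_boot all_order all_algebra.
From mathcomp Require Import all_classical all_reals all_analysis.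
Set Implicit Arguments.
Unset Strict Implicit.
Unset Printing Implicit Defensive.
Import Order.TTheory GRing.Theory Num.Theory.
Import numFieldNormedType.Exports.
Local Open Scope classical_set_scope.
Local Open Scope ring_scope.

(* A real Hilbert space: a complete normed space over R (H : completeNormedModType R)
   whose norm comes from an inner product. *)
Record inner_product (R : realType) (H : normedModType R) := InnerProduct {
  ip :> H -> H -> R;
  ip_sym : forall x y, ip x y = ip y x;
  ip_linl : forall (a : R) x y z, ip (a *: x + y) z = a * ip x z + ip y z;
  ip_normE : forall x, ip x x = `|x| ^+ 2
}.

Definition conv_hull (R : realType) (V : lmodType R) (m : nat) (p : 'I_m -> V)
  : set V :=
  [set x | exists l : 'I_m -> R, (forall i, 0 <= l i) /\ \sum_(i < m) l i = 1 /\
           x = \sum_(i < m) l i *: p i].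

Definition Cset (R : realType) (H : normedModType R) (m : nat)
  (grad : 'I_m -> H -> H) (u : H) : set H :=
  conv_hull (fun i => grad i u).

Definition argmin_ip (R : realType) (H : normedModType R) (ipH : inner_product H)
  (K : set H) (w : H) : set H :=
  [set g | K g /\ forall g', K g' -> ipH g w <= ipH g' w].

Definition Gmap (R : realType) (H : normedModType R) (ipH : inner_product H)
  (m : nat) (grad : 'I_m -> H -> H) (alpha : R) (p : R * H * H) : set (H * H) :=
  let t := p.1.1 in let u := p.1.2 in let v := p.2 in
  [set xi | xi.1 = v /\
     exists g, argmin_ip ipH (Cset grad u) (- v) g /\
               xi.2 = - ((alpha / t) *: v) - g].

Definition pnorm (R : realType) (H : normedModType R) (x : H * H) : R :=
  Num.sqrt (`|x.1| ^+ 2 + `|x.2| ^+ 2).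

(* proj_K(y) = arg min_{w in K} ||w - y||^2 in H x H (Hilbert norm); the
   minimizer is unique for K nonempty closed convex; we pick it with xget
   (default (0,0), irrelevant when the minimizer exists). *)
Definition hproj (R : realType) (H : normedModType R) (K : set (H * H)) (y : H * H)
  : H * H :=
  xget (0, 0) [set w | K w /\ forall w', K w' ->
          pnorm (w - y) ^+ 2 <= pnorm (w' - y) ^+ 2].

Definition usc_on (X Y : topologicalType) (D : set X) (G : X -> set Y) :=
  forall x0, D x0 -> forall N : set Y, open N -> G x0 `<=` N ->
    exists M : set X, nbhs x0 M /\ forall x, M x -> D x -> G x `<=` N.

Definition locally_compact_on (X Y : topologicalType) (D : set X) (phi : X -> Y) :=
  forall x0, D x0 -> exists M : set X, nbhs x0 M /\
    exists K : set Y, compact K /\ forall x, M x -> D x -> K (phi x).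

Definition finite_dim (R : realType) (V : lmodType R) :=
  exists (n : nat) (e : 'I_n -> V), forall x, exists c : 'I_n -> R,
    x = \sum_(i < n) c i *: e i.

(* Main.v *)
Require Import Defs.
From HB Require Import structures.
From mathcomp Require Import all_boot all_order all_algebra.
From mathcomp Require Import all_classical all_reals all_analysis.
From mathcomp Require Import ring lra.
Import Order.TTheory GRing.Theory Num.Theory.
Import numFieldNormedType.Exports.
Local Open Scope classical_set_scope.
Local Open Scope ring_scope.
Set Implicit Arguments.
Unset Strict Implicit.
Unset Printing Implicit Defensive.
Section IP.
Variables (R : realType) (H : normedModType R) (ip : inner_product H).

Lemma ipDl x y z : ip (x + y) z = ip x z + ip y z.
Proof. by have := ip_linl ip 1 x y z; rewrite scale1r mul1r. Qed.

Lemma ip0l z : ip 0 z = 0.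
Proof.
have := ip_linl ip (-1) 0 0 z; rewrite scaler0 addr0.
by rewrite mulN1r addNr.
Qed.

Lemma ipZl a x z : ip (a *: x) z = a * ip x z.
Proof. by have := ip_linl ip a x 0 z; rewrite addr0 ip0l addr0. Qed.

Lemma ipNl x z : ip (- x) z = - ip x z.
Proof. by rewrite -scaleN1r ipZl mulN1r. Qed.

Lemma ipBl x y z : ip (x - y) z = ip x z - ip y z.
Proof. by rewrite ipDl ipNl. Qed.

Lemma ipDr x y z : ip z (x + y) = ip z x + ip z y.
Proof. by rewrite ip_sym ipDl !(ip_sym ip z). Qed.
Lemma ipZr a x z : ip z (a *: x) = a * ip z x.
Proof. by rewrite ip_sym ipZl (ip_sym ip z). Qed.
Lemma ipNr x z : ip z (- x) = - ip z x.
Proof. by rewrite ip_sym ipNl (ip_sym ip z). Qed.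
Lemma ip0r z : ip z 0 = 0.
Proof. by rewrite ip_sym ip0l. Qed.

Lemma ip_suml (I : finType) (l : I -> R) (p : I -> H) w :
  ip (\sum_i l i *: p i) w = \sum_i l i * ip (p i) w.
Proof.
rewrite (big_morph (fun x => ip x w) (fun x y => ipDl x y w) (ip0l w)).
by apply: eq_bigr => i _; rewrite ipZl.
Qed.

Lemma ip_polar x y : ip x y = (`|x + y| ^+ 2 - `|x - y| ^+ 2) / 4.
Proof.
rewrite -!(ip_normE ip) !ipDl !ipDr !ipNl !ipNr.
rewrite (ip_sym ip y x); field.
by [].
Qed.

Lemma cauchy_schwarz x y : `|ip x y| <= `|x| * `|y|.
Proof.
have key : forall s : R, 0 <= `|x| ^+ 2 + 2 * s * ip x y + s ^+ 2 * `|y| ^+ 2.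
  move=> s.
  have -> : `|x| ^+ 2 + 2 * s * ip x y + s ^+ 2 * `|y| ^+ 2
     = ip (x + s *: y) (x + s *: y).
    rewrite ipDl !ipDr !ipZl !ipZr (ip_sym ip y x) !(ip_normE ip); ring.
  by rewrite ip_normE sqr_ge0.
have nx := normr_ge0 x; have ny := normr_ge0 y.
have hb : ip x y ^+ 2 <= (`|x| * `|y|) ^+ 2.
  have [y0|ypos] := eqVneq `|y| 0.
    move/eqP: y0; rewrite normr_eq0 => /eqP ->; rewrite ip0r normr0; lra.
  have yp : 0 < `|y| by rewrite lt_neqAle eq_sym ypos.
  have := key (- ip x y / `|y| ^+ 2).
  set b := ip x y; set a := `|y|; set c := `|x|.
  move=> h.
  have e : c ^+ 2 + 2 * (- b / a ^+ 2) * b + (- b / a ^+ 2) ^+ 2 * a ^+ 2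
           = c ^+ 2 - b ^+ 2 / a ^+ 2.
    by field.
  rewrite e subr_ge0 ler_pdivrMr ?exprn_gt0 // in h.
  by rewrite exprMn.
have hN : 0 <= `|x| * `|y| by exact: mulr_ge0.
move: hb hN; set N := `|x| * `|y|; set b := ip x y => hb hN.
rewrite ler_norml; apply/andP; split; nra.
Qed.

Lemma ip_cont : continuous (fun p : H * H => ip p.1 p.2).
Proof.
have -> : (fun p : H * H => ip p.1 p.2) =
  (fun p => (`|p.1 + p.2| * `|p.1 + p.2| - `|p.1 - p.2| * `|p.1 - p.2|) * 4^-1).
  by apply: funext => p; rewrite ip_polar !expr2.
have c1 : continuous (fun p : H * H => `|p.1 + p.2|).
  move=> p; apply: cvg_norm.
  by apply: cvgD; [exact: cvg_fst | exact: cvg_snd].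
have c2 : continuous (fun p : H * H => `|p.1 - p.2|).
  move=> p; apply: cvg_norm.
  by apply: cvgB; [exact: cvg_fst | exact: cvg_snd].
move=> p; apply: cvgMr_tmp.
by apply: cvgB; apply: cvgM; [exact: c1|exact: c1|exact: c2|exact: c2].
Qed.

End IP.

Section Hull.
Variables (R : realType) (H : normedModType R) (ip : inner_product H).
Variables (m : nat) (p : 'I_m -> H).

Lemma hull_vertex j : conv_hull p (p j).
Proof.
exists (fun i => (i == j)%:R); split; first by move=> i; rewrite ler0n.
split.
  by rewrite (bigD1 j) //= eqxx big1 ?addr0 // => i /negbTE ->.
by rewrite (bigD1 j) //= eqxx scale1r big1 ?addr0 // => i /negbTE ->; rewrite scale0r.
Qed.

Lemma argmin_le w g : argmin_ip ip (conv_hull p) w g -> forall j, ip g w <= ip (p j) w.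
Proof. by case=> _ h j; apply: h; apply: hull_vertex. Qed.

Lemma argmin_support w g (l : 'I_m -> R) : argmin_ip ip (conv_hull p) w g ->
  (forall i, 0 <= l i) -> \sum_i l i = 1 -> g = \sum_i l i *: p i ->
  forall i, 0 < l i -> ip (p i) w = ip g w.
Proof.
move=> hg l0 l1 ge i li.
have hle := argmin_le hg.
have hs : \sum_i (l i * (ip (p i) w - ip g w)) = 0.
  under eq_bigr => k _ do rewrite mulrBr.
  rewrite sumrB -big_distrl /= l1 mul1r -ip_suml -ge; exact: subrr.
have h0 : forall k, true -> 0 <= l k * (ip (p k) w - ip g w).
  by move=> k _; apply: mulr_ge0 => //; rewrite subr_ge0.
have /eqP := psumr_eq0P h0 hs isT (i := i).
rewrite mulf_eq0 (gt_eqF li) /= subr_eq0 => /eqP //.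
Qed.

Lemma l_le1 (l : 'I_m -> R) : (forall i, 0 <= l i) -> \sum_i l i = 1 ->
  forall i, l i <= 1.
Proof.
move=> l0 l1 i; rewrite -l1 (bigD1 i) //= lerDl.
by apply: sumr_ge0 => k _.
Qed.

Lemma hull_in_argmin w (l : 'I_m -> R) : (forall i, 0 <= l i) -> \sum_i l i = 1 ->
  (forall i, 0 < l i -> forall j, ip (p i) w <= ip (p j) w) ->
  argmin_ip ip (conv_hull p) w (\sum_i l i *: p i).
Proof.
move=> l0 l1 hl; split; first by exists l.
have hj : forall j, ip (\sum_i l i *: p i) w <= ip (p j) w.
  move=> j; rewrite ip_suml.
  have -> : ip (p j) w = \sum_i l i * ip (p j) w by rewrite -big_distrl /= l1 mul1r.
  apply: ler_sum => i _.
  have [li0|lipos] := eqVneq (l i) 0; first by rewrite li0 !mul0r.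
  apply: ler_wpM2l => //; apply: hl.
  by rewrite lt_neqAle eq_sym lipos l0.
move=> g' [l' [l'0 [l'1 ->]]].
rewrite [in X in _ <= X]ip_suml -[ip _ w]mul1r -l'1 big_distrl /=.
by apply: ler_sum => j _; apply: ler_wpM2l.
Qed.

Lemma argmin_convex w g1 g2 (k : R) : 0 <= k -> k <= 1 ->
  argmin_ip ip (conv_hull p) w g1 -> argmin_ip ip (conv_hull p) w g2 ->
  argmin_ip ip (conv_hull p) w (k *: g1 + (1 - k) *: g2).
Proof.
move=> k0 k1 [[l1 [l10 [l11 e1]]] h1] [[l2 [l20 [l21 e2]]] h2]; split.
  exists (fun i => k * l1 i + (1 - k) * l2 i); split.
    by move=> i; apply: addr_ge0; apply: mulr_ge0 => //; rewrite subr_ge0.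
  split; first by rewrite big_split /= -!big_distrr /= l11 l21 !mulr1 addrC subrK.
  rewrite e1 e2 !scaler_sumr -big_split /=; apply: eq_bigr => i _.
  by rewrite /= [in RHS]scalerDl !scalerA.
move=> g' hg'; rewrite ipDl !ipZl.
have := h1 g' hg'; have := h2 g' hg'; nra.
Qed.

Lemma hull_norm g : conv_hull p g -> `|g| <= \sum_i `|p i|.
Proof.
move=> [l [l0 [l1 ->]]].
apply: le_trans (ler_norm_sum _ _ _) _; apply: ler_sum => i _.
rewrite normrZ ger0_norm //; rewrite -[X in _ <= X]mul1r.
by apply: ler_wpM2r => //; apply: l_le1.
Qed.

End Hull.

Lemma cvg_bigsum (R : realType) (V : normedModType R) (T : Type) (F : set_system T)
  (FF : Filter F) (I : Type) (r : seq I) (f : I -> T -> V) (a : I -> V) :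
  (forall i, f i x @[x --> F] --> a i) ->
  (\sum_(i <- r) f i x) @[x --> F] --> \sum_(i <- r) a i.
Proof.
move=> h; elim: r => [|i r IH].
  rewrite big_nil; under eq_fun do rewrite big_nil; exact: cvg_cst.
rewrite big_cons; under eq_fun do rewrite big_cons.
exact: cvgD.
Qed.


Section Pnorm.
Variables (R : realType) (H : normedModType R).

Lemma pnorm_le (x : H * H) : pnorm x <= `|x.1| + `|x.2|.
Proof.
have a0 := normr_ge0 x.1; have b0 := normr_ge0 x.2.
rewrite /pnorm -[X in _ <= X]ger0_norm ?addr_ge0 // -sqrtr_sqr.
apply: ler_wsqrtr; nra.
Qed.

Lemma pnorm_ge1 (x : H * H) : `|x.1| <= pnorm x.
Proof.
rewrite /pnorm -[X in X <= _]normr_id -sqrtr_sqr.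
by apply: ler_wsqrtr; rewrite lerDl sqr_ge0.
Qed.

Lemma pnorm_ge2 (x : H * H) : `|x.2| <= pnorm x.
Proof.
rewrite /pnorm -[X in X <= _]normr_id -sqrtr_sqr.
by apply: ler_wsqrtr; rewrite lerDr sqr_ge0.
Qed.

End Pnorm.


Section FD.
Variables (R : realType) (H : normedModType R) (ip : inner_product H).

Lemma fd_ball_compact : finite_dim H ->
  forall r : R, exists K : set H, compact K /\ forall x, `|x| <= r -> K x.
Proof.
move=> [n [e he]] r.
pose T := fun c : 'rV[R]_n => \sum_i c ord0 i *: e i.
pose S := fun x : H => \row_i ip x (e i) : 'rV[R]_n.
pose Gm := \matrix_(i, j) ip (e i) (e j) : 'M[R]_n.
pose P := pinvmx Gm.
have STc : forall c, S (T c) = c *m Gm.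
  move=> c; apply/rowP => j; rewrite !mxE ip_suml; apply: eq_bigr => i _.
  by rewrite !mxE.
have Tsurj : forall x, exists c, x = T c.
  move=> x; have [c0 ->] := he x; exists (\row_i c0 i).
  by rewrite /T; apply: eq_bigr => i _; rewrite mxE.
have Sinj : forall x c, S (T c) = S x -> T c = x.
  move=> x c hS.
  have [c0 ex] := Tsurj x.
  pose z := T c - x.
  have ez : z = T (c - c0).
    rewrite /z ex /T -sumrB; apply: eq_bigr => i _.
    by rewrite !mxE scalerBl.
  have hz : forall i, ip z (e i) = 0.
    move=> i; rewrite /z ipDl ipNl.
    have := congr1 (fun v : 'rV[R]_n => v ord0 i) hS; rewrite /S !mxE => ->.
    exact: subrr.
  have : `|z| ^+ 2 = 0.
    rewrite -(ip_normE ip) {1}ez /T ip_suml big1 // => i _.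
    by rewrite ip_sym hz mulr0.
  move/eqP; rewrite sqrf_eq0 normr_eq0 subr_eq0 => /eqP //.
pose C := fun j : 'I_n => \sum_i `|e i| * `|P i j|.
pose A := fun j : 'I_n => `[- (r * C j), r * C j]%classic.
exists (T @` [set c : 'rV[R]_n | forall j, A j (c ord0 j)]); split.
  apply: continuous_compact; last by apply: rV_compact => j; exact: segment_compact.
  apply: continuous_subspaceT => c.
  apply: (cvg_bigsum (F := nbhs c)) => i; apply: cvgZ; last exact: cvg_cst.
  exact: (@coord_continuous _ 1 n ord0 i c).
move=> x hx.
have [c0 ex] := Tsurj x.
have hsub : (S x <= Gm)%MS by rewrite ex STc submxMl.
exists (S x *m P); last first.
  apply: Sinj; rewrite STc; exact: mulmxKpV.
move=> j; rewrite /A /= in_itv /= -ler_norml mxE.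
apply: le_trans (ler_norm_sum _ _ _) _.
rewrite /C mulr_sumr; apply: ler_sum => i _.
rewrite mxE normrM.
rewrite mulrA; apply: ler_wpM2r => //.
apply: le_trans (cauchy_schwarz ip x (e i)) _.
by apply: ler_wpM2r.
Qed.

End FD.

Section Main.
Variables (R : realType) (H : completeNormedModType R) (ip : inner_product H).
Variables (m : nat) (hm : (0 < m)%N) (grad : 'I_m -> H -> H).
Hypothesis grad_cont : forall i, continuous (grad i).
Variables (alpha : R).

Definition Phi (x : R * H * H) (l : 'rV[R]_m) : H * H :=
  (x.2, - ((alpha / x.1.1) *: x.2) - \sum_i l ord0 i *: grad i x.1.2).

Lemma Phi_cont (l : 'rV[R]_m) (x : R * H * H) : x.1.1 != 0 ->
  (fun q : 'rV[R]_m * (R * H * H) => Phi q.2 q.1) @ (l, x) --> Phi x l.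
Proof.
move=> hx.
have hs : (fun q : 'rV[R]_m * (R * H * H) => q.2) @ (l, x) --> x  by apply: cvg_snd.
have hf : (fun q : 'rV[R]_m * (R * H * H) => q.1) @ (l, x) --> l by apply: cvg_fst.
have h11 : (fun y : R * H * H => y.1.1) @ x --> x.1.1  by apply: cvg_comp; apply: cvg_fst.
have h12 : (fun y : R * H * H => y.1.2) @ x --> x.1.2  by apply: cvg_comp; [apply: cvg_fst|apply: cvg_snd].
have h2 : (fun y : R * H * H => y.2) @ x --> x.2 by apply: cvg_snd.
apply: cvg_pair.
  exact: cvg_comp hs h2.
apply: cvgB.
  apply: cvgN; apply: cvgZ.
    apply: cvgM; first exact: cvg_cst.
    apply: cvgV => //; exact: cvg_comp hs h11.
  exact: cvg_comp hs h2.
apply: cvg_bigsum => i; apply: cvgZ.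
  exact: (cvg_comp _ _ hf (@coord_continuous _ 1 m ord0 i l)).
exact: (cvg_comp _ _ (cvg_comp _ _ hs h12) (@grad_cont i x.1.2)).
Qed.


Definition act (x0 : R * H * H) (i : 'I_m) :=
  forall j, ip (grad i x0.1.2) (- x0.2) <= ip (grad j x0.1.2) (- x0.2).

Definition Aset (x0 : R * H * H) (i : 'I_m) : set R :=
  [set r | 0 <= r <= 1 /\ (~ act x0 i -> r = 0)].

Definition Delta (x0 : R * H * H) : set 'rV[R]_m :=
  [set l | forall i, Aset x0 i (l ord0 i)] `&` [set l | \sum_i l ord0 i = 1].

Lemma act_exists x0 : exists j0, act x0 j0.
Proof.
pose F := fun j : 'I_m => ip (grad j x0.1.2) (- x0.2).
have [j0 _ hj0] := arg_minP F (i0 := Ordinal hm) (P := xpredT) isT.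
by exists j0 => j; apply: hj0.
Qed.

Lemma act_strict x0 j0 : act x0 j0 -> forall i, ~ act x0 i ->
  ip (grad j0 x0.1.2) (- x0.2) < ip (grad i x0.1.2) (- x0.2).
Proof.
move=> hj0 i nai; rewrite ltNge; apply/negP => h; apply: nai => j.
exact: le_trans h (hj0 j).
Qed.

Lemma G_sub x0 x j0 : act x0 j0 ->
  (forall i, ~ act x0 i -> ip (grad j0 x.1.2) (- x.2) < ip (grad i x.1.2) (- x.2)) ->
  Gmap ip grad alpha x `<=` Phi x @` Delta x0.
Proof.
move=> hj0 hx xi [h1 [g [hg h2]]].
have hg' := hg; case: hg' => -[l [l0 [l1 ge]]] _.
exists (\row_i l i).
  split.
    move=> i; rewrite mxE; split; first by rewrite l0 /= (l_le1 l0 l1).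
    move=> nai; apply/eqP; apply: contraT => li.
    have lp : 0 < l i by rewrite lt_neqAle eq_sym li l0.
    have e := argmin_support hg l0 l1 ge lp.
    have := hx i nai; rewrite e.
    by move=> hlt; have := lt_le_trans hlt (argmin_le hg j0); rewrite ltxx.
  by rewrite /= (eq_bigr l) // => i _; rewrite mxE.
rewrite /Phi; case: xi h1 h2 => a b /= -> ->; congr (_, _); congr (_ - _).
by rewrite ge; apply: eq_bigr => i _; rewrite mxE.
Qed.

Lemma G_sup x0 : Phi x0 @` Delta x0 `<=` Gmap ip grad alpha x0.
Proof.
move=> xi [L [hA hs] <-]; split => //.
exists (\sum_i L ord0 i *: grad i x0.1.2); split => //.
apply: (hull_in_argmin (l := fun i => L ord0 i)) => //.
- by move=> i; have [[]] := hA i; case/andP.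
- move=> i li; apply: contrapT => nai.
  by have [_ /(_ nai)] := hA i; move=> e; rewrite e ltxx in li.
Qed.

Lemma G_eq x0 : Gmap ip grad alpha x0 = Phi x0 @` Delta x0.
Proof.
apply/seteqP; split; last exact: G_sup.
have [j0 hj0] := act_exists x0.
exact: G_sub hj0 (act_strict hj0).
Qed.


Lemma sum_cont : continuous (fun l : 'rV[R]_m => \sum_i l ord0 i).
Proof.
move=> l; apply: (cvg_bigsum (F := nbhs l)) => i.
exact: (@coord_continuous _ 1 m ord0 i l).
Qed.

Lemma Delta_compact x0 : compact (Delta x0).
Proof.
apply: compact_closedI.
  apply: rV_compact => i.
  have [ai|nai] := pselect (act x0 i).
    rewrite (_ : Aset x0 i = `[0, 1]%classic); first exact: segment_compact.
    apply/seteqP; split => r /=; rewrite in_itv /=.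
      by case.
    by move=> h; split => // /(_ ai).
  rewrite (_ : Aset x0 i = [set 0]); first exact: compact_set1.
  apply/seteqP; split => r /=.
    by case=> _ /(_ nai).
  by move=> ->; split => //; rewrite lexx ler01.
apply: (@preimage_closed _ _ (fun l : 'rV[R]_m => \sum_i l ord0 i) [set r | r = 1]);
  last exact: closed_eq.
by move=> l _; apply: sum_cont.
Qed.

Lemma G_compact x0 : compact (Gmap ip grad alpha x0).
Proof.
rewrite G_eq; apply: continuous_compact; last exact: Delta_compact.
suff hc : continuous (Phi x0) by apply: continuous_subspaceT.
move=> l; rewrite /Phi.
apply: (cvg_pair (F := nbhs l)); first exact: cvg_cst.
apply: cvgB; first exact: cvg_cst.
apply: cvg_bigsum => i; apply: cvgZ; last exact: cvg_cst.
exact: (@coord_continuous _ 1 m ord0 i l).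
Qed.


Lemma G_convex x : convex_set (Gmap ip grad alpha x).
Proof.
move=> a b k; rewrite !inE => -[ha1 [g1 [hg1 ha2]]] [hb1 [g2 [hg2 hb2]]].
rewrite /conv /=.
have k0 : 0 <= k%:num by [].
have k1 : k%:num <= 1 by [].
have eo : unstable.onem k%:num = 1 - k%:num by [].
rewrite eo; set c := k%:num in k0 k1 *.
split.
  rewrite /= ha1 hb1 -scalerDl addrC subrK scale1r; done.
exists (c *: g1 + (1 - c) *: g2); split; first exact: argmin_convex.
rewrite /= ha2 hb2; set y := (alpha / x.1.1) *: x.2.
rewrite !scalerBr !scalerN.
have ey : y = c *: y + (1 - c) *: y by rewrite -scalerDl addrC subrK scale1r.
by rewrite [in RHS]ey !opprD addrACA.
Qed.

Lemma ipg_cont i : continuous (fun x : R * H * H => ip (grad i x.1.2) (- x.2)).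
Proof.
move=> x.
have h12 : (fun y : R * H * H => y.1.2) @ x --> x.1.2  by apply: cvg_comp; [apply: cvg_fst|apply: cvg_snd].
have h2 : (fun y : R * H * H => y.2) @ x --> x.2 by apply: cvg_snd.
apply: (cvg_comp (fun y : R * H * H => (grad i y.1.2, - y.2)) (fun p : H * H => ip p.1 p.2) _ (@ip_cont _ _ ip (grad i x.1.2, - x.2))).
apply: (cvg_pair (F := nbhs x)).
  exact: (cvg_comp _ _ h12 (@grad_cont i x.1.2)).
exact: cvgN.
Qed.

Lemma G_usc (t0 : R) (ht0 : 0 < t0) :
  usc_on [set p : R * H * H | t0 <= p.1.1] (Gmap ip grad alpha).
Proof.
move=> x0 Dx0 N oN GN.
have hx0 : x0.1.1 != 0 by rewrite gt_eqF // (lt_le_trans ht0 Dx0).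
have [j0 hj0] := act_exists x0.
have hcov : \forall x \near x0, Delta x0 `<=` (fun l => N (Phi x l)).
  have := (compact_near_coveringP (Delta x0)).1 (Delta_compact (x0 := x0)) (R * H * H)%type
     (nbhs x0) (fun x l => N (Phi x l)) _.
  apply => l Dl.
  have hN : nbhs (Phi x0 l) N.
    by apply: open_nbhs_nbhs; split => //; apply: GN; apply: G_sup; exists l.
  exact: (Phi_cont (l := l) hx0 hN).
have hact : \forall x \near x0, forall i, ~ act x0 i ->
    ip (grad j0 x.1.2) (- x.2) < ip (grad i x.1.2) (- x.2).
  apply: (filter_forall (F := nbhs x0)) => i.
  have [ai|nai] := pselect (act x0 i).
    by apply: nearW => x /(_ ai).
  pose F := fun x : R * H * H => ip (grad i x.1.2) (- x.2) - ip (grad j0 x.1.2) (- x.2).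
  have cF : F @ x0 --> F x0 by apply: cvgB; [exact: ipg_cont|exact: ipg_cont].
  have Fp : 0 < F x0 by rewrite subr_gt0; exact: act_strict.
  have := cvgr_gt (F x0) cF 0 Fp.
  move=> /(_ (nbhs_filter x0)) hF.
  by apply: filterS hF => x hx _; rewrite -subr_gt0; exact: hx.
exists [set x | (forall i, ~ act x0 i ->
    ip (grad j0 x.1.2) (- x.2) < ip (grad i x.1.2) (- x.2)) /\
    Delta x0 `<=` (fun l => N (Phi x l))].
split; first exact: filterI hact hcov.
move=> x [ha hb] _ xi hxi.
have [L hL <-] := G_sub hj0 ha hxi.
exact: hb.
Qed.

Lemma G_bound (t0 : R) (ht0 : 0 < t0) (halpha : 0 < alpha) (L : R) (L0 : 0 <= L) :
  (forall i x y, `|grad i x - grad i y| <= L * `|x - y|) ->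
  exists c : R, 0 < c /\ forall p, t0 <= p.1.1 -> forall xi,
    Gmap ip grad alpha p xi -> pnorm xi <= c * (1 + pnorm (p.1.2, p.2)).
Proof.
move=> lip.
pose S0 := \sum_i `|grad i 0|.
have S00 : 0 <= S0 by apply: sumr_ge0 => i _.
pose A := alpha / t0.
have A0 : 0 <= A by apply: divr_ge0; apply: ltW.
pose M := m%:R * L.
have M0 : 0 <= M by apply: mulr_ge0.
exists (1 + A + S0 + M); split.
  by apply: (lt_le_trans ltr01); rewrite -!addrA lerDl !addr_ge0.
move=> p hp xi [h1 [g [hg h2]]].
set u := p.1.2; set v := p.2.
have hgn : `|g| <= S0 + M * `|u|.
  apply: le_trans (hull_norm hg.1) _.
  have e : M * `|u| = \sum_(i < m) (L * `|u|).
    by rewrite sumr_const card_ord /M -mulrA mulr_natl.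
  rewrite e /S0 -big_split /=.
  apply: ler_sum => i _.
  have := lip i u 0; rewrite subr0 => hl.
  have := ler_normD (grad i u - grad i 0) (grad i 0); rewrite subrK -/u.
  lra.
have pt : 0 < p.1.1 by exact: lt_le_trans ht0 hp.
have hA : alpha / p.1.1 <= A.
  by rewrite /A ler_pM2l // lef_pV2 ?posrE.
have h2n : `|xi.2| <= A * `|v| + (S0 + M * `|u|).
  rewrite h2; apply: le_trans (ler_normB _ _) _; apply: lerD => //.
  have a0 : 0 <= alpha / p.1.1 by apply: divr_ge0; apply: ltW.
  rewrite normrN normrZ (ger0_norm a0).
  by apply: ler_wpM2r.
have hP := pnorm_le xi.
have hu := pnorm_ge1 (u, v); have hv := pnorm_ge2 (u, v).
move: hu hv; rewrite /=; set P := pnorm (u, v) => hu hv.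
rewrite h1 in hP.
have nu := normr_ge0 u; have nv := normr_ge0 v.
nra.
Qed.

Lemma phi_lc (t0 : R) (ht0 : 0 < t0) (halpha : 0 < alpha) : finite_dim H ->
  locally_compact_on [set p : R * H * H | t0 <= p.1.1]
    (fun p => hproj (Gmap ip grad alpha p) (0, 0)).
Proof.
move=> fd x0 Dx0.
pose B1 := `|x0.2| + 1.
pose sg := fun x : R * H * H => \sum_i `|grad i x.1.2|.
pose Bg := sg x0 + 1.
pose r := B1 + (alpha / t0 * B1 + Bg).
have A0 : 0 <= alpha / t0 by apply: divr_ge0; apply: ltW.
have B10 : 0 <= B1 by apply: addr_ge0.
have sg0 : forall x, 0 <= sg x by move=> x; apply: sumr_ge0.
have Bg0 : 0 <= Bg by apply: addr_ge0.
have r0 : 0 <= r by apply: addr_ge0 => //; apply: addr_ge0 => //; apply: mulr_ge0.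
have [K0 [cK0 hK0]] := fd_ball_compact ip fd r.
have h2 : (fun y : R * H * H => y.2) @ x0 --> x0.2 by apply: cvg_snd.
have h12 : (fun y : R * H * H => y.1.2) @ x0 --> x0.1.2.
  by apply: cvg_comp; [apply: cvg_fst|apply: cvg_snd].
have n1 : \forall x \near x0, `|x.2| < B1.
  by apply: (cvgr_norm_lt (F := nbhs x0) x0.2 h2); rewrite /B1 ltrDl.
have n2 : \forall x \near x0, sg x < Bg.
  apply: (cvgr_lt (F := nbhs x0) (sg x0)); last by rewrite /Bg ltrDl.
  apply: (cvg_bigsum (F := nbhs x0)) => i; apply: cvg_norm.
  exact: (cvg_comp _ _ h12 (@grad_cont i x0.1.2)).
exists [set x | `|x.2| < B1 /\ sg x < Bg]; split; first exact: filterI n1 n2.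
exists (K0 `*` K0); split; first exact: compact_setX.
move=> x [hx1 hx2] Dx.
rewrite /hproj.
set Q := [set w | _ /\ _].
have [[w Qw]|nQ] := pselect (exists w, Q w); last first.
  rewrite xgetPN; last by move=> w Qw; apply: nQ; exists w.
  by split; apply: hK0; rewrite normr0.
have := xgetPex (0, 0) (ex_intro _ w Qw).
move: (xget _ _) => xi [[xi1 [g [hg xi2]]] _].
have pt : 0 < x.1.1 by exact: lt_le_trans ht0 Dx.
split; apply: hK0.
  rewrite xi1; apply: le_trans (ltW hx1) _; rewrite /r lerDl.
  by apply: addr_ge0 => //; apply: mulr_ge0.
rewrite xi2; apply: le_trans (ler_normB _ _) _.
rewrite normrN normrZ ger0_norm; last by apply: divr_ge0; apply: ltW.
have hgn := hull_norm hg.1.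
have hA : alpha / x.1.1 <= alpha / t0.
  by rewrite ler_pM2l // lef_pV2 ?posrE.
have nv := normr_ge0 x.2.
have : alpha / x.1.1 * `|x.2| <= alpha / t0 * B1.
  apply: le_trans (ler_wpM2r nv hA) _.
  by apply: ler_wpM2l => //; apply: ltW.
rewrite /r; move: hgn hx2; rewrite /sg.
lra.
Qed.
End Main.

Theorem proposition3p1 (R : realType) (H : completeNormedModType R)
  (ipH : inner_product H) (m : nat) (hm : (0 < m)%N)
  (f : 'I_m -> H -> R) (grad : 'I_m -> H -> H)
  (f_convex : forall i, convex_function setT (f i))
  (f_diff : forall i u, differentiable (f i) u)
  (f_grad : forall i u h, 'd (f i) u h = ipH (grad i u) h)
  (grad_cont : forall i, continuous (grad i))
  (alpha t0 : R) (halpha : 0 < alpha) (ht0 : 0 < t0) :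
  let D := [set p : R * H * H | t0 <= p.1.1] in
  let G := Gmap ipH grad alpha in
  (* (i) *)
  (forall p, D p -> convex_set (G p) /\ compact (G p)) /\
  (* (ii) *)
  usc_on D G /\
  (* (iii) *)
  (finite_dim H -> locally_compact_on D (fun p => hproj (G p) (0, 0))) /\
  (* (iv) *)
  (forall L : R, 0 <= L ->
     (forall i x y, `|grad i x - grad i y| <= L * `|x - y|) ->
     exists c : R, 0 < c /\ forall p, D p -> forall xi, G p xi ->
       pnorm xi <= c * (1 + pnorm (p.1.2, p.2))).
Proof.
move=> D G; split.
  move=> p _; split; first exact: G_convex.
  exact: (G_compact hm).
split; first exact: (G_usc hm grad_cont ht0).
split; first exact: (phi_lc ipH grad_cont ht0 halpha).
move=> L L0 lip; exact: (G_bound ipH ht0 halpha L0 lip).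
Qed.
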